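(* Let $a_1,a_2,a_3,a_4>0$ satisfy $4a_2a_4>(a_1+a_3)^2$, let $z_0>0$, set $y_0=z_0a_1/a_2$ and $\beta=\frac12\sqrt{4a_2a_4-(a_1+a_3)^2}\in\mathbb{R}$. For $y'\in[0,y_0)$ let $\tau\mapsto(z(\tau,y'),y(\tau,y'))$ be the solution of $\dot z=a_1z-a_2y$, $\dot y=a_4z-a_3y$ with $(z(0),y(0))=(z_0,y')$, explicitly $$z(\tau,y')=e^{\frac{a_1-a_3}{2}\tau}\Big(z_0\cos\beta\tau+\Big(z_0\frac{a_1+a_3}{2\beta}-\frac{y'a_2}{\beta}\Big)\sin\beta\tau\Big),$$ $$y(\tau,y')=e^{\frac{a_1-a_3}{2}\tau}\Big(y'\cos\beta\tau+\Big(\frac{a_4z_0}{\beta}-y'\frac{a_1+a_3}{2\beta}\Big)\sin\beta\tau\Big).$$ Then for each $y'\in[0,y_0)$ there exist a unique $y^+=y^+(y')>y_0$ and a minimal $\tau_1=\tau_1(y')>0$ such that $z(\tau_1,y')=z_0$ and $y(\tau_1,y')=y^+$ (i.e. $\tau_1$ is the first positive time at which the trajectory from $(z_0,y')$ reaches the half-line $\{(z_0,y):y>y_0\}$). Moreover, $\tau_1$ does not depend on $z_0$: writing $y'=\alpha y_0$ with $\alpha$ fixed, $\tau_1$ is determined by $a_1,\dots,a_4,\alpha$ alone.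
   Context: This describes the within-host dynamics of an infected host with viral load $z\ge z_0$ ($z_0$ the minimum detectable viral load) and antibody level $y\ge0$. The time $\tau_1(y')$ is interpreted as the time an infected individual entering the infected compartment with antibody level $y'$ remains infected before transitioning to the recovered compartment. *)

(* Defs.v *)
From Stdlib Require Import Reals.
Open Scope R_scope.

Definition y0 (a1 a2 z0 : R) : R := z0 * a1 / a2.

Definition beta (a1 a2 a3 a4 : R) : R :=
  / 2 * sqrt (4 * a2 * a4 - (a1 + a3) ^ 2).

(* explicit solution of z' = a1 z - a2 y, y' = a4 z - a3 y, (z,y)(0) = (z0,y') *)
Definition zsol (a1 a2 a3 a4 z0 y' tau : R) : R :=
  let b := beta a1 a2 a3 a4 in
  exp ((a1 - a3) / 2 * tau) *
  (z0 * cos (b * tau) + (z0 * (a1 + a3) / (2 * b) - y' * a2 / b) * sin (b * tau)).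

Definition ysol (a1 a2 a3 a4 z0 y' tau : R) : R :=
  let b := beta a1 a2 a3 a4 in
  exp ((a1 - a3) / 2 * tau) *
  (y' * cos (b * tau) + (a4 * z0 / b - y' * (a1 + a3) / (2 * b)) * sin (b * tau)).

Definition first_hit (a1 a2 a3 a4 z0 y' tau1 yplus : R) : Prop :=
  0 < tau1 /\
  zsol a1 a2 a3 a4 z0 y' tau1 = z0 /\
  ysol a1 a2 a3 a4 z0 y' tau1 = yplus /\
  yplus > y0 a1 a2 z0 /\
  (forall t, 0 < t < tau1 ->
     ~ (zsol a1 a2 a3 a4 z0 y' t = z0 /\ ysol a1 a2 a3 a4 z0 y' t > y0 a1 a2 z0)).

(* Main.v *)
Require Import Defs.
From Stdlib Require Import Reals Lra Psatz.
From Coquelicot Require Import Coquelicot.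
Open Scope R_scope.

Lemma beta_facts a1 a2 a3 a4 : 4 * a2 * a4 > (a1 + a3) ^ 2 ->
  0 < beta a1 a2 a3 a4 /\
  beta a1 a2 a3 a4 * beta a1 a2 a3 a4 = a2 * a4 - ((a1 + a3)/2)^2.
Proof.
  intros H. unfold beta. assert (HD: 0 < 4 * a2 * a4 - (a1 + a3) ^ 2) by lra.
  split.
  - apply Rmult_lt_0_compat; [lra| apply sqrt_lt_R0; lra].
  - replace (/ 2 * sqrt (4 * a2 * a4 - (a1 + a3) ^ 2) *
     (/ 2 * sqrt (4 * a2 * a4 - (a1 + a3) ^ 2))) with
     (/4 * (sqrt (4 * a2 * a4 - (a1 + a3) ^ 2) * sqrt (4 * a2 * a4 - (a1 + a3) ^ 2))) by field.
    rewrite sqrt_sqrt; lra.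
Qed.

Lemma dZ a1 a2 a3 a4 z0 y' t : 0 < a2 -> 4 * a2 * a4 > (a1 + a3) ^ 2 ->
  derivable_pt_lim (zsol a1 a2 a3 a4 z0 y') t
    (a1 * zsol a1 a2 a3 a4 z0 y' t - a2 * ysol a1 a2 a3 a4 z0 y' t).
Proof.
  intros Ha2 H. destruct (beta_facts _ _ _ _ H) as [Hb Hbb].
  apply is_derive_Reals. unfold zsol, ysol. cbv zeta.
  set (b := beta a1 a2 a3 a4) in *. clearbody b.
  auto_derive; [exact I|].
  assert (Ha4 : a4 = (b*b + ((a1+a3)/2)^2)/a2) by (rewrite Hbb; field; lra).
  subst a4. field. lra.
Qed.

Lemma dY a1 a2 a3 a4 z0 y' t : 0 < a2 -> 4 * a2 * a4 > (a1 + a3) ^ 2 ->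
  derivable_pt_lim (ysol a1 a2 a3 a4 z0 y') t
    (a4 * zsol a1 a2 a3 a4 z0 y' t - a3 * ysol a1 a2 a3 a4 z0 y' t).
Proof.
  intros Ha2 H. destruct (beta_facts _ _ _ _ H) as [Hb Hbb].
  apply is_derive_Reals. unfold zsol, ysol. cbv zeta.
  set (b := beta a1 a2 a3 a4) in *. clearbody b.
  auto_derive; [exact I|].
  assert (Ha4 : a4 = (b*b + ((a1+a3)/2)^2)/a2) by (rewrite Hbb; field; lra).
  subst a4. field. lra.
Qed.

Lemma Z0 a1 a2 a3 a4 z0 y' : zsol a1 a2 a3 a4 z0 y' 0 = z0.
Proof. unfold zsol. rewrite !Rmult_0_r, exp_0, cos_0, sin_0. ring. Qed.
Lemma Y0 a1 a2 a3 a4 z0 y' : ysol a1 a2 a3 a4 z0 y' 0 = y'.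
Proof. unfold ysol. rewrite !Rmult_0_r, exp_0, cos_0, sin_0. ring. Qed.

Lemma ZT a1 a2 a3 a4 z0 y' : 0 < beta a1 a2 a3 a4 -> 0 < z0 ->
  zsol a1 a2 a3 a4 z0 y' (PI / beta a1 a2 a3 a4) < z0.
Proof.
  intros Hb Hz. unfold zsol. cbv zeta.
  replace (beta a1 a2 a3 a4 * (PI / beta a1 a2 a3 a4)) with PI by (field; lra).
  rewrite cos_PI, sin_PI.
  pose proof (exp_pos ((a1 - a3) / 2 * (PI / beta a1 a2 a3 a4))). nra.
Qed.

Lemma right_pos (f : R -> R) x l : derivable_pt_lim f x l -> 0 < l ->
  exists d, 0 < d /\ forall h, 0 < h < d -> f x < f (x + h).
Proof.
  intros Hd Hl. destruct (Hd (l/2) ltac:(lra)) as [d Hd'].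
  exists d. split; [apply cond_pos|]. intros h Hh.
  assert (Hh0 : h <> 0) by lra.
  specialize (Hd' h Hh0 ltac:(rewrite Rabs_pos_eq; lra)).
  apply Rabs_def2 in Hd'. destruct Hd' as [H1 H2].
  assert (0 < (f (x + h) - f x) / h) by lra.
  assert (0 < (f (x + h) - f x)).
  { replace (f (x + h) - f x) with ((f (x + h) - f x) / h * h) by (field; lra). nra. }
  lra.
Qed.

Lemma left_pos (f : R -> R) x l : derivable_pt_lim f x l -> 0 < l ->
  exists d, 0 < d /\ forall h, 0 < h < d -> f (x - h) < f x.
Proof.
  intros Hd Hl. destruct (Hd (l/2) ltac:(lra)) as [d Hd'].
  exists d. split; [apply cond_pos|]. intros h Hh.
  assert (Hh0 : -h <> 0) by lra.
  specialize (Hd' (-h) Hh0 ltac:(rewrite Rabs_Ropp, Rabs_pos_eq; lra)).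
  apply Rabs_def2 in Hd'. destruct Hd' as [H1 H2].
  assert (0 < (f (x + - h) - f x) / - h) by lra.
  assert (0 < - (f (x + - h) - f x)).
  { replace (- (f (x + - h) - f x)) with ((f (x + - h) - f x) / - h * h) by (field; lra). nra. }
  replace (x - h) with (x + - h) by ring. lra.
Qed.

Lemma left_pos2 (g : R -> R) x L : derivable_pt_lim g x L -> L < 0 -> g x = 0 ->
  exists d, 0 < d /\ forall h, 0 < h < d -> 0 < g (x - h).
Proof.
  intros Hd Hl Hg. destruct (Hd (-L/2) ltac:(lra)) as [d Hd'].
  exists d. split; [apply cond_pos|]. intros h Hh.
  assert (Hh0 : -h <> 0) by lra.
  specialize (Hd' (-h) Hh0 ltac:(rewrite Rabs_Ropp, Rabs_pos_eq; lra)).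
  apply Rabs_def2 in Hd'. destruct Hd' as [H1 H2]. rewrite Hg in H1, H2.
  assert ((g (x + - h) - 0) / - h < 0) by lra.
  assert (0 < (g (x + - h) - 0)).
  { replace (g (x + - h) - 0) with (- ((g (x + - h) - 0) / - h * h)) by (field; lra). nra. }
  replace (x - h) with (x + - h) by ring. lra.
Qed.

Lemma first_zero (f : R -> R) T :
  0 < T -> f T < 0 -> (forall x, continuity_pt f x) ->
  (exists d, 0 < d /\ forall h, 0 < h < d -> 0 < f h) ->
  exists t, 0 < t <= T /\ f t = 0 /\ forall s, 0 < s < t -> 0 < f s.
Proof.
  intros HT HfT Hc [d [Hd Hpos]].
  set (E := fun t => 0 < t <= T /\ forall s, 0 < s <= t -> 0 < f s).
  assert (Hb : bound E). { exists T. intros t [Ht _]. lra. }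
  set (t0 := Rmin (d/2) T).
  assert (He : E t0).
  { unfold t0; split. - split; [apply Rmin_glb_lt; lra | apply Rmin_r].
    - intros s Hs. apply Hpos. split; [lra|]. pose proof (Rmin_l (d/2) T). lra. }
  destruct (completeness E Hb (ex_intro _ t0 He)) as [t [Hub Hlub]].
  assert (Ht0 : t0 <= t) by (apply Hub; exact He).
  assert (Ht0p : 0 < t0) by (destruct He as [[? ?] _]; lra).
  assert (HtT : t <= T) by (apply Hlub; intros x [Hx _]; lra).
  assert (Hleft : forall s, 0 < s < t -> 0 < f s).
  { intros s Hs. destruct (Rle_or_lt s t0) as [Hst|Hst].
    - destruct He as [_ He]. apply He; lra.
    -
      destruct (Classical_Prop.classic (exists u, E u /\ s <= u)) as [[u [[Hu1 Hu2] Hsu]]|Hn].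
      + apply Hu2; lra.
      + exfalso. assert (t <= s).
        { apply Hlub. intros u Hu. destruct (Rle_or_lt u s); [lra|]. exfalso; apply Hn; exists u; split; [auto|lra]. }
        lra. }
  exists t. split; [lra|]. split; [|exact Hleft].
  destruct (Rtotal_order (f t) 0) as [Hlt|[Heq|Hgt]]; [exfalso| exact Heq | exfalso].
  - destruct (Hc t (- f t) ltac:(lra)) as [e [He0 Hce]].
    set (s := Rmax (t - e/2) (t/2)).
    assert (Hs1 : t - e/2 <= s) by apply Rmax_l. assert (Hs2 : t/2 <= s) by apply Rmax_r.
    assert (Hs3 : s < t) by (apply Rmax_lub_lt; lra).
    specialize (Hleft s ltac:(lra)).
    destruct (Req_dec s t) as [Heq|Hne]; [lra|].
    assert (Hd' : R_dist s t < e).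
    { unfold R_dist. rewrite Rabs_left by lra. lra. }
    specialize (Hce s (conj (conj I (not_eq_sym Hne)) Hd')). simpl in Hce. unfold R_dist in Hce.
    apply Rabs_def2 in Hce. lra.
  - destruct (Rle_lt_or_eq_dec t T HtT) as [HtT'|HtT']; [| subst t; lra].
    destruct (Hc t (f t) Hgt) as [e [He0 Hce]].
    set (u := Rmin (t + e/2) T).
    assert (Hu1 : u <= t + e/2) by apply Rmin_l. assert (Hu2 : u <= T) by apply Rmin_r.
    assert (Hu3 : t < u) by (apply Rmin_glb_lt; lra).
    assert (E u).
    { split; [lra|]. intros s Hs. destruct (Rlt_or_le s t) as [Hst|Hst].
      - apply Hleft; lra.
      - destruct (Req_dec t s) as [->|Hne]; [lra|].
        assert (Hd' : R_dist s t < e).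
        { unfold R_dist. rewrite Rabs_right by lra. lra. }
        specialize (Hce s (conj (conj I Hne) Hd')). simpl in Hce. unfold R_dist in Hce.
        apply Rabs_def2 in Hce. lra. }
    assert (u <= t) by (apply Hub; auto). lra.
Qed.

Lemma exist_hit a1 a2 a3 a4 z0 y' :
  0 < a1 -> 0 < a2 -> 0 < a3 -> 0 < a4 ->
  4 * a2 * a4 > (a1 + a3) ^ 2 -> 0 < z0 -> 0 <= y' < y0 a1 a2 z0 ->
  exists t, first_hit a1 a2 a3 a4 z0 y' t (ysol a1 a2 a3 a4 z0 y' t).
Proof.
  intros H1 H2 H3 H4 H Hz [Hy1 Hy2].
  destruct (beta_facts _ _ _ _ H) as [Hb Hbb].
  set (Z := zsol a1 a2 a3 a4 z0 y'). set (Y := ysol a1 a2 a3 a4 z0 y').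
  assert (HdZ : forall t, derivable_pt_lim Z t (a1 * Z t - a2 * Y t)) by (intro; apply dZ; auto).
  assert (HdY : forall t, derivable_pt_lim Y t (a4 * Z t - a3 * Y t)) by (intro; apply dY; auto).
  unfold y0 in Hy2.
  assert (Hy2' : a2 * y' < z0 * a1).
  { apply (Rmult_lt_compat_l a2) in Hy2; [|lra]. replace (a2 * (z0 * a1 / a2)) with (z0*a1) in Hy2 by (field; lra). lra. }
  set (f := fun t => Z t - z0).
  assert (Hdf : forall t, derivable_pt_lim f t (a1 * Z t - a2 * Y t - 0)).
  { intro t. apply (derivable_pt_lim_minus Z (fun _ => z0)); [apply HdZ| apply derivable_pt_lim_const]. }
  assert (Hcf : forall t, continuity_pt f t).
  { intro t. apply (derivable_continuous_pt f t (exist _ _ (Hdf t))). }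
  destruct (first_zero f (PI / beta a1 a2 a3 a4)) as [t [Ht [Hft Hpos]]].
  - apply Rdiv_lt_0_compat; [apply PI_RGT_0|lra].
  - unfold f. pose proof (ZT a1 a2 a3 a4 z0 y' Hb Hz). unfold Z. lra.
  - exact Hcf.
  - destruct (right_pos Z 0 (a1 * Z 0 - a2 * Y 0) (HdZ 0)) as [d [Hd Hd']].
    { unfold Z, Y. rewrite Z0, Y0. lra. }
    exists d; split; auto. intros h Hh. specialize (Hd' h Hh). unfold f.
    rewrite Rplus_0_l in Hd'. unfold Z in Hd' |- *. rewrite Z0 in Hd'. lra.
  - unfold f in Hft, Hpos. assert (HZt : Z t = z0) by lra.
    assert (HYt : Y t > y0 a1 a2 z0).
    { unfold y0. destruct (Rtotal_order (Y t) (z0 * a1 / a2)) as [Hlt|[Heq|Hgt]]; [exfalso|exfalso|exact Hgt].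
      - destruct (left_pos Z t _ (HdZ t)) as [d [Hd Hd']].
        { rewrite HZt. apply (Rmult_lt_compat_l a2) in Hlt; [|lra].
          replace (a2 * (z0 * a1 / a2)) with (z0*a1) in Hlt by (field; lra). lra. }
        set (h := Rmin d t / 2).
        assert (0 < h) by (unfold h; assert (0 < Rmin d t) by (apply Rmin_glb_lt; lra); lra).
        assert (h < d) by (unfold h; pose proof (Rmin_l d t); lra).
        assert (h < t) by (unfold h; pose proof (Rmin_r d t); lra).
        specialize (Hd' h ltac:(lra)). specialize (Hpos (t - h) ltac:(lra)). lra.
      - set (g := fun x => a1 * Z x - a2 * Y x).
        assert (Hdg : derivable_pt_lim g t (a1 * (a1 * Z t - a2 * Y t) - a2 * (a4 * Z t - a3 * Y t))).
        { exact (derivable_pt_lim_minus _ _ t _ _ (derivable_pt_lim_scal Z a1 t _ (HdZ t)) (derivable_pt_lim_scal Y a2 t _ (HdY t))). }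
        destruct (left_pos2 g t _ Hdg) as [d [Hd Hd']].
        { rewrite HZt, Heq.
          assert (a1 * a3 < a2 * a4) by (pose proof (pow2_ge_0 (a1 - a3)); nra).
          replace (a1 * (a1 * z0 - a2 * (z0 * a1 / a2)) - a2 * (a4 * z0 - a3 * (z0 * a1 / a2)))
            with (- z0 * (a2 * a4 - a1 * a3)) by (field; lra). nra. }
        { unfold g. rewrite HZt, Heq. field. lra. }
        set (h := Rmin d t / 2).
        assert (0 < h) by (unfold h; assert (0 < Rmin d t) by (apply Rmin_glb_lt; lra); lra).
        assert (h < d) by (unfold h; pose proof (Rmin_l d t); lra).
        assert (h < t) by (unfold h; pose proof (Rmin_r d t); lra).
        destruct (MVT_cor2 Z g (t - h) t ltac:(lra) (fun c _ => HdZ c)) as [c [Hc1 Hc2]].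
        specialize (Hd' (t - c) ltac:(lra)). replace (t - (t - c)) with c in Hd' by ring.
        specialize (Hpos (t - h) ltac:(lra)).
        assert (0 < g c * (t - (t - h))) by (apply Rmult_lt_0_compat; lra). lra. }
    exists t. unfold first_hit. fold Z Y. repeat split; try lra; auto.
    intros s Hs [Hs1 _]. specialize (Hpos s Hs). lra.
Qed.

Lemma tau_unique a1 a2 a3 a4 z0 y' t1 t2 p1 p2 :
  first_hit a1 a2 a3 a4 z0 y' t1 p1 -> first_hit a1 a2 a3 a4 z0 y' t2 p2 -> t1 = t2 /\ p1 = p2.
Proof.
  intros [A1 [B1 [C1 [D1 E1]]]] [A2 [B2 [C2 [D2 E2]]]].
  assert (t1 = t2).
  { destruct (Rtotal_order t1 t2) as [Hl|[He|Hg]]; auto; exfalso.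
    - apply (E2 t1); [lra|split; [auto|lra]].
    - apply (E1 t2); [lra|split; [auto|lra]]. }
  subst t2. split; auto. congruence.
Qed.

Lemma scale_hit a1 a2 a3 a4 z0 y' t p k : 0 < k ->
  first_hit a1 a2 a3 a4 z0 y' t p -> first_hit a1 a2 a3 a4 (k * z0) (k * y') t (k * p).
Proof.
  intros Hk [A [B [C [D E]]]].
  assert (HZ : forall s, zsol a1 a2 a3 a4 (k * z0) (k * y') s = k * zsol a1 a2 a3 a4 z0 y' s)
    by (intro; unfold zsol; cbv zeta; unfold Rdiv; ring).
  assert (HY : forall s, ysol a1 a2 a3 a4 (k * z0) (k * y') s = k * ysol a1 a2 a3 a4 z0 y' s)
    by (intro; unfold ysol; cbv zeta; unfold Rdiv; ring).
  assert (H0 : y0 a1 a2 (k * z0) = k * y0 a1 a2 z0) by (unfold y0, Rdiv; ring).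
  unfold first_hit. rewrite !HZ, !HY, H0. repeat split; auto.
  - rewrite B; auto.
  - rewrite C; auto.
  - apply Rmult_lt_compat_l; auto.
  - intros s Hs [Hs1 Hs2]. rewrite HZ in Hs1; rewrite HY in Hs2. apply (E s Hs). split.
    + apply (Rmult_eq_reg_l k); [exact Hs1| lra].
    + apply (Rmult_lt_reg_l k); auto.
Qed.

Theorem proposition1 (a1 a2 a3 a4 : R) :
  0 < a1 -> 0 < a2 -> 0 < a3 -> 0 < a4 ->
  4 * a2 * a4 > (a1 + a3) ^ 2 ->
  (* existence and uniqueness of (tau1, y+) for every z0 > 0, y' in [0, y0) *)
  (forall z0 y', 0 < z0 -> 0 <= y' < y0 a1 a2 z0 ->
     exists tau1 yplus,
       first_hit a1 a2 a3 a4 z0 y' tau1 yplus /\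
       (forall tau yp, first_hit a1 a2 a3 a4 z0 y' tau yp ->
          tau = tau1 /\ yp = yplus)) /\
  (* tau1 does not depend on z0 once y' = alpha * y0 with alpha fixed *)
  (forall alpha z0 z0' tau tau' yp yp',
     0 <= alpha < 1 -> 0 < z0 -> 0 < z0' ->
     first_hit a1 a2 a3 a4 z0 (alpha * y0 a1 a2 z0) tau yp ->
     first_hit a1 a2 a3 a4 z0' (alpha * y0 a1 a2 z0') tau' yp' ->
     tau = tau').
Proof.
  intros H1 H2 H3 H4 H. split.
  - intros z0 y' Hz Hy. destruct (exist_hit a1 a2 a3 a4 z0 y' H1 H2 H3 H4 H Hz Hy) as [t Ht].
    exists t, (ysol a1 a2 a3 a4 z0 y' t). split; auto.
    intros tau yp Hh. destruct (tau_unique _ _ _ _ _ _ _ _ _ _ Hh Ht); auto.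
  - intros alpha z0 z0' tau tau' yp yp' Ha Hz Hz' Hh Hh'.
    assert (Hk : 0 < z0 / z0') by (apply Rdiv_lt_0_compat; auto).
    pose proof (scale_hit _ _ _ _ _ _ _ _ _ Hk Hh') as Hs.
    replace (z0 / z0' * z0') with z0 in Hs by (field; lra).
    replace (z0 / z0' * (alpha * y0 a1 a2 z0')) with (alpha * y0 a1 a2 z0) in Hs
      by (unfold y0; field; lra).
    destruct (tau_unique _ _ _ _ _ _ _ _ _ _ Hh Hs); auto.
Qed.
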